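(* Let $\mathcal{G}=(\mathcal{N},\mathcal{E})$ be a finite rooted tree whose edges are directed from parent to child, and let each edge $e\in\mathcal{E}$ carry a strictly positive weight $w(e)>0$. Call a set of edges $\mathcal{E}'\subseteq\mathcal{E}$ a matching (feasible schedule) if no two distinct edges of $\mathcal{E}'$ share a common vertex, and call a matching a maximum weighted matching (MWM) of $\mathcal{G}$ if it maximizes $\sum_{e\in\mathcal{E}'} w(e)$ over all matchings of $\mathcal{G}$. Let $n_k$ be an arbitrary internal node of $\mathcal{G}$ (i.e., a node with at least one child), and let $\{n_j\}_k$ be the set of its children. Then every MWM of $\mathcal{G}$ contains an edge having as one of its endpoints either $n_k$ or some element of $\{n_j\}_k$.
   Context: The tree models an Integrated Access and Backhaul network in spanning-tree topology: nodes are the IAB-donor (root), IAB-nodes, and representative user nodes; each directed edge $e_{n_j\to n_k}$ goes from a parent node $n_j$ to its child $n_k$. The weight of an edge is the (positive) utility obtained when scheduling that link, and the utility of a set of scheduled links is the sum of their weights. *)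

(* Defs.v *)
From mathcomp Require Import all_boot all_order all_algebra.
Set Implicit Arguments. Unset Strict Implicit. Unset Printing Implicit Defensive.
Import Order.TTheory GRing.Theory Num.Theory.
Local Open Scope ring_scope.

(* A finite rooted tree on the node type T, with root r and set E of directed
   edges (parent, child):
   - no edge enters the root;
   - every non-root node has exactly one parent;
   - every node is reachable from the root along directed edges. *)
Definition rooted_tree (T : finType) (E : {set T * T}) (r : T) : Prop :=
  [/\ forall u : T, (u, r) \notin E,
      forall v : T, v != r -> #|[set u | (u, v) \in E]| = 1%N
    & forall v : T, connect (fun x y => (x, y) \in E) r v].

Definition share_vertex (T : finType) (e1 e2 : T * T) : bool :=
  [|| e1.1 == e2.1, e1.1 == e2.2, e1.2 == e2.1 | e1.2 == e2.2].

Definition is_matching (T : finType) (E M : {set T * T}) : Prop :=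
  M \subset E /\
  (forall e1 e2, e1 \in M -> e2 \in M -> e1 != e2 -> ~~ share_vertex e1 e2).

Definition weight_of (R : numDomainType) (T : finType) (w : T * T -> R)
  (M : {set T * T}) : R := \sum_(e in M) w e.

Definition is_MWM (R : numDomainType) (T : finType) (E : {set T * T})
  (w : T * T -> R) (M : {set T * T}) : Prop :=
  is_matching E M /\
  (forall M' : {set T * T}, is_matching E M' -> weight_of w M' <= weight_of w M).

(* Main.v *)
Require Import Defs.
From mathcomp Require Import all_boot all_order all_algebra.
Import Order.TTheory GRing.Theory Num.Theory.
Local Open Scope ring_scope.

Theorem lemma1 (R : realFieldType) (T : finType) (E : {set T * T}) (r : T)
  (w : T * T -> R) (nk : T) :
  rooted_tree E r ->
  (forall e, e \in E -> 0 < w e) ->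
  (exists v, (nk, v) \in E) ->
  forall M : {set T * T}, is_MWM E w M ->
  exists2 e, e \in M &
    [|| e.1 == nk, e.2 == nk, (nk, e.1) \in E | (nk, e.2) \in E].
Proof.
move=> _ wpos [v Ev] M [[sME mM] maxM].
set P := fun e : T * T => [|| e.1 == nk, e.2 == nk, (nk, e.1) \in E | (nk, e.2) \in E].
case: (boolP [exists e in M, P e]) => [/existsP [e /andP [eM Pe]]|noex].
  by exists e.
exfalso.
have nP : forall e, e \in M -> ~~ P e.
  move=> e eM; apply/negP => Pe; move/negP: noex; apply; apply/existsP; exists e.
  by rewrite eM.
have e0M : (nk, v) \notin M.
  by apply/negP => /nP; rewrite /P /= eqxx.
have ns1 : forall e, e \in M -> ~~ share_vertex e (nk, v) /\ ~~ share_vertex (nk, v) e.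
  move=> e /nP; rewrite /P /share_vertex /=.
  case: e => a b /=.
  case: (eqVneq a nk) => [->|] //=; case: (eqVneq b nk) => [->|] //= anb bnk.
  case: (eqVneq a v) => [->|]; first by rewrite Ev.
  case: (eqVneq b v) => [->|]; first by rewrite Ev orbT.
  by move=> *; split.
have mM' : is_matching E ((nk, v) |: M).
  split.
    by rewrite subUset sub1set Ev sME.
  move=> e1 e2; rewrite !in_setU1 => /orP [/eqP->|h1] /orP [/eqP->|h2].
  - by rewrite eqxx.
  - by move=> _; case: (ns1 _ h2).
  - by move=> _; case: (ns1 _ h1).
  - exact: mM.
have := maxM _ mM'.
rewrite /weight_of big_setU1 //= gerDr.
by rewrite leNgt (wpos _ Ev).
Qed.
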